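(* Let $n$ be a positive integer and let $l=n-1$. The $n\times n$ matrices $P_1,P_2,\dots,P_{(n-1)^2},C_1,C_2,\dots,C_n$ are linearly independent.
   Context: Numbering of positions: for an $l\times l$ matrix, the position $(i,j)$ is assigned the number $i+(j-i)l \pmod{l^2}$, taken in $\{1,\dots,l^2\}$ (residue $0$ is read as $l^2$). For each integer $1\le i\le l^2$, let $A_i\in M_l$ be the $(0,1)$-matrix whose entries are all $0$ except those in the positions numbered $i,i+1,\dots,i+l-2 \pmod{l^2}$, which are $1$ (so $A_i$ has at most one $1$ in each row and column, with one zero row and one zero column). For $1\le i\le (n-1)^2$, $P_i$ is the unique $n\times n$ permutation matrix such that deleting its first row and first column yields $A_i$. For $j\in[n]$, $C_j$ is the $n\times n$ $(0,1)$-matrix whose $j$-th column consists of all $1$'s and all other entries are $0$. *)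

(* Defs.v *)
From HB Require Import structures.
From mathcomp Require Import all_boot all_order all_algebra all_fingroup.
Set Implicit Arguments. Unset Strict Implicit. Unset Printing Implicit Defensive.
Import Order.TTheory GRing.Theory Num.Theory.

(* Rows/columns i, j are given
   0-based (as ordinals); the paper's 1-based indices are i+1, j+1.
   The number is (i+1) + ((j+1)-(i+1)) l  mod l^2, taken in {1,...,l^2}
   (residue 0 is read as l^2). *)
Definition pos_num (l i j : nat) : nat :=
  let r := `|((i.+1%:Z + (j%:Z - i%:Z) * l%:Z) %% (l ^ 2)%:Z)%Z|%N in
  if r == 0%N then (l ^ 2)%N else r.

Definition Amx (R : pzRingType) (l k : nat) : 'M[R]_l :=
  \matrix_(i < l, j < l)
    (([exists t : 'I_(l.-1), pos_num l i j == (k + t) %[mod l ^ 2]] : nat)%:R)%R.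

Definition Cmx (R : pzRingType) (n : nat) (j : 'I_n) : 'M[R]_n :=
  \matrix_(r < n, c < n) ((c == j : nat)%:R)%R.

Definition delete_rc (R : Type) (n : nat) (i0 : 'I_n) (M : 'M[R]_n)
  : 'M[R]_n.-1 := row' i0 (col' i0 M).

(* Main.v *)
Require Import Defs.
From HB Require Import structures.
From mathcomp Require Import all_boot all_order all_algebra all_fingroup.
From mathcomp Require Import zify ring lra.
Import GRing.Theory Num.Theory.
Lemma modsub (N q c t : nat) : (0 < N)%N -> (t < N)%N ->
  ((q %% N == (c + t) %% N) = ((q + (N - c %% N)) %% N == t))%N.
Proof.
move=> N0 tN.
rewrite -(eqn_modDr (N - c %% N)).
have -> : (c + t + (N - c %% N)) %% N = t.
  have -> : c + t + (N - c %% N) = (c %/ N).+1 * N + t.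
    have := divn_eq c N; have := ltn_pmod c N0; lia.
  by rewrite modnMDl modn_small.
by [].
Qed.

Lemma sum_ge M c : (\sum_(k < M) (c <= k : nat) = M - c)%N.
Proof.
elim: M => [|M IH]; first by rewrite big_ord0.
rewrite big_ord_recr /= IH; case: (leqP c M) => h /=; lia.
Qed.

Lemma G_char (N L k q : nat) : 0 < N -> L <= N ->
  [exists t : 'I_L, q == k + t %[mod N]] = ((q + (N - k %% N)) %% N < L).
Proof.
move=> N0 LN; apply/existsP/idP => [[t]|h].
  by rewrite modsub //; [move/eqP->; apply: ltn_ord | apply: leq_trans (ltn_ord t) LN].
exists (Ordinal h) => /=; rewrite modsub //; last by apply: leq_trans h LN.
Qed.

Lemma G_diff (N L k q : nat) : 0 < L -> L < N ->
  [exists t : 'I_L, q.+1 == k.+1 + t %[mod N]] + (q %% N == (k + L) %% N)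
  = [exists t : 'I_L, q == k.+1 + t %[mod N]] + (q %% N == k %% N).
Proof.
move=> L0 LN; have N0 : 0 < N by apply: leq_ltn_trans LN.
rewrite (G_char _ _ _ _ N0 (ltnW LN)) (G_char _ _ _ _ N0 (ltnW LN)).
have -> : k + L = k.+1 + L.-1 by rewrite addSn -addnS prednK.
have -> : k %% N = (k.+1 + N.-1) %% N by rewrite addSn -addnS prednK // modnDr.
have LN1 : L.-1 < N by rewrite (leq_ltn_trans _ LN) // leq_pred.
have NN1 : N.-1 < N by rewrite prednK.
rewrite (modsub _ _ _ _ N0 LN1) (modsub _ _ _ _ N0 NN1).
have -> : (q.+1 + (N - k.+1 %% N)) %% N = ((q + (N - k.+1 %% N)) %% N).+1 %% N.
  rewrite addSn; set X := q + _; by rewrite -[X.+1]addn1 -[(X %% N).+1]addn1 modnDml.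
set D := (q + (N - k.+1 %% N)) %% N.
have DN : D < N by rewrite ltn_pmod.
clearbody D.
case: (ltngtP D.+1 N) => h.
- rewrite modn_small //; lia.
- lia.
- rewrite h modnn; lia.
Qed.


Lemma natx (l' : nat) : (l'.+1 ^ 2 = l' * l'.+2 + 1)%N.
Proof. nia. Qed.
Lemma naty (m l' : nat) : (m.+1 + l'.+2 * l' = m + l'.+1 ^ 2)%N.
Proof. nia. Qed.

Lemma G0 (N L k : nat) : k < N -> L <= N ->
  [exists t : 'I_L, 0 == k.+1 + t %[mod N]] = (N - L <= k).
Proof.
move=> kN LN; have N0 : 0 < N by apply: leq_ltn_trans kN.
rewrite (G_char _ _ _ _ N0 LN) add0n.
case: (ltngtP k.+1 N) => h.
- rewrite (modn_small h) modn_small; lia.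
- lia.
- rewrite h modnn subn0 modnn; lia.
Qed.

Local Open Scope ring_scope.

Lemma colsum_perm (R : pzRingType) m (M : 'M[R]_m) c :
  is_perm_mx M -> \sum_r M r c = 1.
Proof.
case/is_perm_mxP=> s ->.
have -> : \sum_r perm_mx s r c = \sum_r (s r == c)%:R :> R.
  by apply: eq_bigr => r _; rewrite /perm_mx !mxE.
rewrite (reindex_inj (@perm_inj _ s^-1)) /=.
under eq_bigr do rewrite permKV.
rewrite (bigD1 c) //= eqxx big1 ?addr0 // => r hr.
by rewrite (negbTE hr).
Qed.

Lemma sum_delta (R : pzRingType) m (f : 'I_m -> R) c :
  \sum_j f j * ((c == j : nat)%:R) = f c.
Proof.
rewrite (bigD1 c) //= eqxx mulr1 big1 ?addr0 // => j hj.
by rewrite eq_sym (negbTE hj) mulr0.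
Qed.


Lemma pos_surj (l q : nat) : (0 < l)%N ->
  exists i j : 'I_l, (pos_num l i j %% l ^ 2 = q %% l ^ 2)%N.
Proof.
move=> l0.
have N0 : (0 < l ^ 2)%N by rewrite expn_gt0 l0.
set N := (l ^ 2)%N.
set q1 := ((q + N.-1) %% N)%N.
have q1N : (q1 < N)%N by rewrite ltn_pmod.
have i_lt : (q1 %% l < l)%N by rewrite ltn_pmod.
have j_lt : ((q1 %% l + q1 %/ l) %% l < l)%N by rewrite ltn_pmod.
exists (Ordinal i_lt), (Ordinal j_lt) => /=.
set i := (q1 %% l)%N. set d := (q1 %/ l)%N. set j := ((i + d) %% l)%N.
set w := ((i + d) %/ l)%N.
have e1 : (i + d = w * l + j)%N by apply: divn_eq.
have e2 : (q1 = d * l + i)%N by apply: divn_eq.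
have ez : ((i.+1)%:Z + (j%:Z - i%:Z) * l%:Z = (- (w%:Z)) * N%:Z + (q1.+1)%:Z)%R.
  have e1' : (i%:Z + d%:Z = w%:Z * l%:Z + j%:Z)%R by rewrite -!PoszM -!PoszD e1.
  have e2' : (q1%:Z = d%:Z * l%:Z + i%:Z)%R by rewrite -!PoszM -!PoszD e2.
  have -> : j%:Z = (i%:Z + d%:Z - w%:Z * l%:Z)%R by rewrite e1'; ring.
  rewrite -[q1.+1]addn1 -[i.+1]addn1 !PoszD e2' /N -[(l ^ 2)%N]/(l * l)%N PoszM; ring.
rewrite /pos_num ez modzMDl modz_nat absz_nat.
have r_eq : ((q1.+1) %% N = q %% N)%N.
  by rewrite /q1 -addn1 modnDml -addnA addn1 prednK // modnDr.
case: eqP => h.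
  by rewrite modnn -r_eq h.
by rewrite ?modn_mod.
Qed.


Theorem mainTheorem5 (R : numFieldType) (n : nat) (hn : (0 < n)%N)
    (P : 'I_((n.-1) ^ 2) -> 'M[R]_n) :
  (forall k, is_perm_mx (P k) /\
             delete_rc (Ordinal hn) (P k) = Amx R n.-1 k.+1) ->
  forall (a : 'I_((n.-1) ^ 2) -> R) (b : 'I_n -> R),
    \sum_k a k *: P k + \sum_j b j *: Cmx R j = 0 ->
    (forall k, a k = 0) /\ (forall j, b j = 0).
Proof.
move=> HP a b Hsum.
case: n hn P HP a b Hsum => [//|l] hn P HP a b Hsum.
set i0 := Ordinal hn.
have E r c : \sum_k a k * P k r c + b c = 0.
  have := congr1 (fun M : 'M[R]_l.+1 => M r c) Hsum; rewrite /= !mxE !summxE.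
  move=> H; rewrite -[RHS]H; congr (_ + _).
    by apply: eq_bigr => k _; rewrite mxE.
  by rewrite -(@sum_delta _ _ b c); apply: eq_bigr => j _; rewrite !mxE.
have Ecol c : \sum_k a k + b c *+ l.+1 = 0.
  have : \sum_r (\sum_k a k * P k r c + b c) = 0 by apply: big1 => r _; apply: E.
  rewrite big_split /= exchange_big /= sumr_const card_ord.
  under eq_bigr => k _ do rewrite -mulr_sumr (@colsum_perm _ _ _ c (proj1 (HP k))) mulr1.
  by [].
suff Ha : forall k, a k = 0.
  split=> // j; have := Ecol j; rewrite big1 // add0r => /eqP.
  by rewrite mulrn_eq0 /= => /eqP.
case: (posnP l) => [l0|lpos].
  by move=> k; have := ltn_ord k; move: (nat_of_ord k); rewrite l0.
have Eb c : b c = b i0.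
  have h : (b c - b i0) *+ l.+1 = 0.
    rewrite mulrnBl; apply/eqP; rewrite subr_eq0; apply/eqP.
    by apply: (addrI (\sum_k a k)); rewrite !Ecol.
  by move/eqP: h; rewrite mulrn_eq0 /= subr_eq0 => /eqP.
set N := (l ^ 2)%N.
have N0 : (0 < N)%N by rewrite expn_gt0 lpos.
set L := l.-1.
pose F := fun q : nat => \sum_(k < N) a k *
   (([exists t : 'I_L, q == k.+1 + t %[mod N]] : nat)%:R).
have HA k : delete_rc i0 (P k) = Amx R l k.+1 := proj2 (HP k).
have Fpos (i j : 'I_l) : F (pos_num l i j) = - b i0.
  rewrite -(Eb (lift i0 j)); apply: (addIr (b (lift i0 j))).
  rewrite addNr -(E (lift i0 i) (lift i0 j)); congr (_ + _).
  apply: eq_bigr => k _; congr (_ * _).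
  have -> : P k (lift i0 i) (lift i0 j) = delete_rc i0 (P k) i j.
    by rewrite /delete_rc !mxE.
  by rewrite HA mxE.
have Fmod q q' : (q %% N = q' %% N)%N -> F q = F q'.
  by move=> e; apply: eq_bigr => k _; rewrite e.
have Fc q : F q = - b i0.
  have [i [j e]] := pos_surj l q lpos.
  by rewrite -(Fpos i j); apply: Fmod; rewrite e.
pose aN := fun m : nat => a (Ordinal (ltn_pmod m N0)).
have aN_mod m m' : (m %% N = m' %% N)%N -> aN m = aN m'.
  by move=> e; rewrite /aN; congr a; apply: val_inj => /=.
have aNk (k : 'I_N) : a k = aN k.
  by rewrite /aN; congr a; apply: val_inj => /=; rewrite modn_small.
have pick (q : nat) : \sum_(k < N) a k * (((q %% N == k %% N)%N : nat)%:R) = aN q.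
  rewrite (bigD1 (Ordinal (ltn_pmod q N0))) //= modn_mod eqxx mulr1.
  rewrite big1 ?addr0 // => k hk.
  rewrite (modn_small (ltn_ord k)); case: eqP => e; last by rewrite mulr0.
  by case/eqP: hk; apply: val_inj => /=.
have aNc m : aN m = aN 0%N.
  have [l1|l2] : l = 1%N \/ (1 < l)%N by case: (ltngtP l 1) lpos; try lia; auto.
    by apply: aN_mod; rewrite /N l1 !modn1.
  have LN : (L < N)%N.
    rewrite /L /N; apply: (@leq_ltn_trans l); first exact: leq_pred.
    by rewrite -{1}(expn1 l) ltn_exp2l.
  have L0 : (0 < L)%N by rewrite /L; lia.
  have per k0 : aN (k0 + L)%N = aN k0.
    have h := Fc (k0 + L)%N; rewrite -(Fc (k0 + L).+1) in h.
    have h2 : \sum_(k < N) a k * ((((k0 + L) %% N == (k + L) %% N)%N : nat)%:R)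
            = \sum_(k < N) a k * ((((k0 + L) %% N == k %% N)%N : nat)%:R).
      apply: (@addrI _ (F (k0 + L).+1)); rewrite -[in RHS]h -!big_split /=.
      apply: eq_bigr => k _; rewrite -!mulrDr -!natrD.
      by rewrite G_diff.
    rewrite pick in h2; rewrite -h2 -(pick k0); apply: eq_bigr => k _.
    by rewrite eqn_modDr.
  have perj j m' : aN (m' + j * L)%N = aN m'.
    elim: j => [|j IH]; first by rewrite mul0n addn0.
    by rewrite mulSnr addnA per IH.
  elim: m => // m IH; rewrite -IH -(perj l.+1 m.+1).
  apply: aN_mod.
  have -> : (m.+1 + l.+1 * L = m + N)%N.
    rewrite /N /L; case: (l) lpos => // l' _ /=; exact: naty.
  by rewrite modnDr.
have ak (k : 'I_N) : a k = aN 0%N by rewrite aNk aNc.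
have LleN : (L <= N)%N.
  rewrite /L /N; apply: (@leq_trans l); first exact: leq_pred.
  by rewrite expnS expn1 leq_pmulr.
have F0 : F 0%N = aN 0%N * L%:R.
  rewrite /F; under eq_bigr => k _ do rewrite ak (G0 _ _ _ (ltn_ord k) LleN).
  by rewrite -mulr_sumr -natr_sum sum_ge subKn.
have hN : (N = L * l.+1 + 1)%N by rewrite /N /L; case: (l) lpos => // l' _ /=; exact: natx.
have Sa : \sum_k a k = aN 0%N *+ N.
  by under eq_bigr do rewrite ak; rewrite sumr_const card_ord.
have e := Ecol i0; rewrite Sa -(opprK (b i0)) -(Fc 0%N) F0 in e.
have : aN 0%N = aN 0%N *+ N + (- (aN 0%N * L%:R)) *+ l.+1.
  by rewrite -[aN 0%N *+ N]mulr_natr -[_ *+ l.+1]mulr_natr hN natrD natrM; ring.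
rewrite e => a0 k; by rewrite ak.
Qed.
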